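(* Let $n\ge 1$ be an integer, $N=2^n$, and let $t\in[0,N)$ be a non-integer real number. Then $$\frac{1}{N}\sum_{k=0}^{N-1} p_{N,t}(k)\,\cot\!\Big((t-k)\frac{\pi}{N}\Big)=\cot(t\pi).$$
   Context: For a positive integer $N$, a non-integer real $t$ and an integer $k$, define $c_{N,t}(k)=\dfrac{1}{N}\dfrac{\sin((t-k)\pi)}{\sin\!\big((t-k)\frac{\pi}{N}\big)}$ and $p_{N,t}(k)=c_{N,t}(k)^2=\dfrac{1}{N^2}\dfrac{\sin^2((t-k)\pi)}{\sin^2\!\big((t-k)\frac{\pi}{N}\big)}$. (For $0\le k<N$ and $t\in(0,N)$ non-integer, the denominators are nonzero.) *)

(* Defs.v *)
From Stdlib Require Import Reals.
Open Scope R_scope.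

Definition cot (x : R) : R := cos x / sin x.

Definition c_coef (N : nat) (t : R) (k : nat) : R :=
  (1 / INR N) * (sin ((t - INR k) * PI) / sin ((t - INR k) * (PI / INR N))).

Definition p_coef (N : nat) (t : R) (k : nat) : R := (c_coef N t k) ^ 2.

Fixpoint sum_lt (n : nat) (f : nat -> R) : R :=
  match n with
  | O => 0
  | S m => sum_lt m f + f m
  end.

(* Main.v *)
Require Import Defs.
From Stdlib Require Import Reals Lra Lia.
Open Scope R_scope.

Definition ff (y : R) : R := cos y / (sin y) ^ 3.

Definition GG (N : nat) (x : R) : R :=
  sum_lt N (fun k => ff ((x - INR k * PI) / INR N)).

Lemma sum_lt_ext n f g : (forall k, (k < n)%nat -> f k = g k) -> sum_lt n f = sum_lt n g.
Proof.
  induction n; intros H; simpl; auto.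
  rewrite IHn by (intros; apply H; lia). rewrite H by lia. reflexivity.
Qed.

Lemma sum_lt_scal n c f : sum_lt n (fun k => c * f k) = c * sum_lt n f.
Proof. induction n; simpl; [ring| rewrite IHn; ring]. Qed.

Lemma sum_lt_double M g :
  sum_lt (2 * M) g = sum_lt M (fun j => g (2 * j)%nat) + sum_lt M (fun j => g (2 * j + 1)%nat).
Proof.
  induction M; [simpl; ring|].
  replace (sum_lt (S M) (fun j => g (2 * j)%nat) + sum_lt (S M) (fun j => g (2 * j + 1)%nat))
    with (sum_lt (2*M) g + g (2*M)%nat + g (2*M+1)%nat) by (rewrite IHM; simpl; ring). replace (2 * S M)%nat with (S (S (2 * M))) by lia.
  simpl sum_lt. replace (S (2*M)) with (2*M+1)%nat by lia. change (M + (M+0))%nat with (2*M)%nat. replace (S (2*M)) with (2*M+1)%nat by lia. reflexivity.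
Qed.

Lemma dup y : 8 * ff (2 * y) = ff y + ff (y - PI / 2).
Proof.
  unfold ff. rewrite sin_minus, cos_minus, sin_PI2, cos_PI2, sin_2a, cos_2a.
  replace (cos y * 0 + sin y * 1) with (sin y) by ring.
  replace (sin y * 0 - cos y * 1) with (- cos y) by ring.
  destruct (Req_dec (sin y) 0) as [Hs|Hs].
  { rewrite Hs. replace ((2*0*cos y)^3) with 0 by ring. replace (0^3) with 0 by ring.
    unfold Rdiv. rewrite Rinv_0. ring. }
  destruct (Req_dec (cos y) 0) as [Hc|Hc].
  { rewrite Hc. replace ((2*sin y*0)^3) with 0 by ring. replace ((-0)^3) with 0 by ring.
    unfold Rdiv. rewrite Rinv_0. ring. }
  assert (H1 := sin2_cos2 y). unfold Rsqr in H1. rewrite <- (Rmult_1_r (cos y * cos y - sin y * sin y)), <- H1.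
  replace ((- cos y)^3) with (-(cos y ^ 3)) by ring. field. split; auto.
Qed.

Lemma pos2 n : INR (2 ^ n) <> 0.
Proof. apply not_0_INR. apply Nat.pow_nonzero. lia. Qed.

Lemma GG_pow n : forall x, GG (2 ^ n) x = INR (2 ^ n) ^ 3 * ff x.
Proof.
  induction n; intros x.
  { unfold GG. simpl. replace ((x - 0 * PI) / 1) with x by field. ring. }
  unfold GG. simpl (2 ^ S n)%nat. set (M := (2 ^ n)%nat).
  replace (M + (M + 0))%nat with (2 * M)%nat by lia.
  assert (HM : INR M <> 0) by apply pos2.
  rewrite sum_lt_double.
  rewrite (sum_lt_ext _ _ (fun j => ff ((x/2 - INR j * PI) / INR M))).
  2:{ intros k _. f_equal. rewrite !mult_INR. simpl. field. auto. }
  rewrite (sum_lt_ext M (fun j => ff ((x - INR (2 * j + 1) * PI) / INR (2 * M))) (fun j => ff ((x/2 - PI/2 - INR j * PI) / INR M))).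
  2:{ intros k _. f_equal. rewrite !mult_INR, plus_INR, mult_INR. simpl. field. auto. }
  fold (GG M (x/2)). fold (GG M (x/2 - PI/2)). rewrite !IHn.
  rewrite mult_INR. simpl (INR 2).
  replace x with (2 * (x/2)) at 3 by field.
  replace (ff (2 * (x/2))) with ((ff (x/2) + ff (x/2 - PI/2)) / 8)
    by (rewrite <- dup; field). fold M. field.
Qed.

Theorem mainTheorem1 (n : nat) (t : R) :
  (1 <= n)%nat ->
  0 <= t -> t < INR (2 ^ n) ->
  (forall z : Z, t <> IZR z) ->
  (1 / INR (2 ^ n)) *
    sum_lt (2 ^ n) (fun k => p_coef (2 ^ n) t k * cot ((t - INR k) * (PI / INR (2 ^ n))))
  = cot (t * PI).
Proof.
  intros _ _ _ Ht.
  assert (HN := pos2 n). set (N := (2 ^ n)%nat) in *.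
  assert (Hs : sin (t * PI) <> 0).
  { intro H. apply sin_eq_0_0 in H. destruct H as [k Hk]. apply (Ht k).
    apply Rmult_eq_reg_r with PI; auto. apply Rgt_not_eq, PI_RGT_0. }
  rewrite (sum_lt_ext _ _ (fun k => (1 / INR N) ^ 2 * sin (t*PI) ^ 2 *
           ff ((t * PI - INR k * PI) / INR N))).
  2:{ intros k _. unfold p_coef, c_coef, cot, ff.
      replace ((t - INR k) * (PI / INR N)) with ((t * PI - INR k * PI) / INR N) by (field; auto).
      set (a := (t * PI - INR k * PI) / INR N).
      assert (E : sin ((t - INR k) * PI) ^ 2 = sin (t*PI) ^ 2).
      { replace ((t - INR k) * PI) with (t*PI - INR k * PI) by ring.
        rewrite sin_minus.
        assert (H0 : sin (INR k * PI) = 0).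
        { apply sin_eq_0_1. exists (Z.of_nat k). rewrite <- INR_IZR_INZ. auto. }
        assert (H1 := sin2_cos2 (INR k * PI)). rewrite H0 in H1. unfold Rsqr in H1.
        rewrite H0. replace ((sin (t * PI) * cos (INR k * PI) - cos (t * PI) * 0) ^ 2)
          with (sin (t*PI)^2 * (cos (INR k * PI) * cos (INR k * PI))) by ring.
        replace (cos (INR k * PI) * cos (INR k * PI)) with 1 by lra. ring. }
      unfold Rdiv. rewrite <- pow_inv.
      replace ((1 * / INR N * (sin ((t - INR k) * PI) * / sin a)) ^ 2 * (cos a * / sin a))
        with ((1 * / INR N)^2 * sin ((t - INR k) * PI) ^ 2 * (cos a * (/ sin a)^3)) by ring.
      rewrite E. ring. }
  rewrite sum_lt_scal. fold (GG N (t * PI)). unfold N. rewrite GG_pow. fold N.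
  unfold ff, cot. field. split; auto.
Qed.
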